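(* Fix any $\gamma\in[0,1]$ and any $x\in X$. For any distribution $P$ over $\Pi$ and any $\pi\in\Pi$, if $m=\lceil 6/(\gamma^2\mu_t)\rceil$, then \[\mathbb{E}_{\widetilde P\sim P^m}\Bigl|\frac1{(1-K\mu_t)W_{\widetilde P}(x,\pi(x))+\mu_t}-\frac1{(1-K\mu_t)W_P(x,\pi(x))+\mu_t}\Bigr|\le\frac{\gamma}{(1-K\mu_t)W_P(x,\pi(x))+\mu_t}.\] This implies that for all distributions $P$ over $\Pi$ and any $\pi\in\Pi$ there exists $\widetilde P\in\mathcal S_m$ such that for any $\lambda>0$, \[(V_{P,\pi,t}-V_{\widetilde P,\pi,t})+(1+\lambda)(\widehat V_{\widetilde P,\pi,t}-\widehat V_{P,\pi,t})\le\gamma\bigl(V_{P,\pi,t}+(1+\lambda)\widehat V_{P,\pi,t}\bigr).\]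
   Context: $A$ is a set of $K$ actions, $X$ a set of contexts, $\Pi$ a finite set of $N$ policies $\pi:X\to A$, $D_X$ a distribution on $X$, $\delta\in(0,1)$, and $x_1,\dots,x_{t-1}\in X$ a fixed sample. $C_t=2\log(Nt/\delta)$, $\mu_t=\min\{\frac1{2K},\sqrt{C_t/(2Kt)}\}$. For a distribution $P$ over $\Pi$, $W_P(x,a)=\sum_{\pi:\pi(x)=a}P(\pi)$; $V_{P,\pi,t}=\mathbb{E}_{x\sim D_X}[1/((1-K\mu_t)W_P(x,\pi(x))+\mu_t)]$ and $\widehat V_{P,\pi,t}=\frac1{t-1}\sum_{i=1}^{t-1}1/((1-K\mu_t)W_P(x_i,\pi(x_i))+\mu_t)$. $\mathcal S_m$ is the set of distributions of the form $\frac1m\sum_{i=1}^m\mathbb{I}(\pi=\pi_i)$ with $\pi_i\in\Pi$; $\widetilde P\sim P^m$ means $\widetilde P=\frac1m\sum_{i=1}^m\mathbb{I}(\cdot=\pi_i)$ with $\pi_1,\dots,\pi_m$ drawn i.i.d. from $P$. *)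

(* Defs.v *)
From HB Require Import structures.
From mathcomp Require Import all_boot all_order all_algebra.
From mathcomp Require Import all_classical all_reals all_analysis.
Set Implicit Arguments. Unset Strict Implicit. Unset Printing Implicit Defensive.
Import Order.TTheory GRing.Theory Num.Theory.
Import numFieldNormedType.Exports.
Local Open Scope ring_scope.

Section Defs.
Variable R : realType.

Definition Ct (N t : nat) (delta : R) : R := 2 * ln (N%:R * t%:R / delta).

Definition mut (K N t : nat) (delta : R) : R :=
  Num.min (2 * K%:R)^-1 (Num.sqrt (Ct N t delta / (2 * K%:R * t%:R))).

Variables (X : Type) (A Pi : finType) (ev : Pi -> X -> A).

Definition is_distr (P : {ffun Pi -> R}) : Prop :=
  (forall p, 0 <= P p) /\ \sum_p P p = 1.

Definition WP (P : {ffun Pi -> R}) (x : X) (a : A) : R :=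
  \sum_(p | ev p x == a) P p.

Definition wt (K : nat) (mu w : R) : R := ((1 - K%:R * mu) * w + mu)^-1.

Definition emp (m : nat) (s : {ffun 'I_m -> Pi}) : {ffun Pi -> R} :=
  [ffun p => (m%:R)^-1 * #|[set i | s i == p]|%:R].

Definition in_Sm (m : nat) (Q : {ffun Pi -> R}) : Prop :=
  exists s : {ffun 'I_m -> Pi}, Q = emp s.

(* E_{tilde P ~ P^m} F(tilde P) : pi_1..pi_m drawn i.i.d. from P *)
Definition Esample (P : {ffun Pi -> R}) (m : nat) (F : {ffun Pi -> R} -> R) : R :=
  \sum_(s : {ffun 'I_m -> Pi}) (\prod_(i < m) P (s i)) * F (emp s).

Definition Vhat (K N t : nat) (delta : R) (xs : 'I_t.-1 -> X)
    (P : {ffun Pi -> R}) (q : Pi) : R :=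
  (t.-1%:R)^-1 * \sum_(i < t.-1)
     wt K (mut K N t delta) (WP P (xs i) (ev q (xs i))).

End Defs.

Definition Vpop (R : realType) (d : measure_display) (X : measurableType d)
    (D : probability X R) (A Pi : finType) (ev : Pi -> X -> A)
    (K N t : nat) (delta : R) (P : {ffun Pi -> R}) (q : Pi) : R :=
  Rintegral D setT (fun x => wt K (mut K N t delta) (WP ev P x (ev q x))).

(* Main.v *)
Require Import Defs.
From HB Require Import structures.
From mathcomp Require Import all_boot all_order all_algebra.
From mathcomp Require Import all_classical all_reals all_analysis.
From mathcomp Require Import ring lra.
Import Order.TTheory GRing.Theory Num.Theory.
Import numFieldNormedType.Exports.
Local Open Scope ring_scope.

Set Implicit Arguments. Unset Strict Implicit. Unset Printing Implicit Defensive.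
Section PW.

Lemma key_u (R : realFieldType) (c mu w u : R) : 0 < c -> 0 < mu -> 0 < w ->
  3/10 * (c*w+mu) < u -> u <= c * w ->
  21/25 * (c*mu*w) <= u * (c*w+mu-u).
Proof.
move=> c0 m0 w0 h1 h2.
have cw0 : 0 < c * w by apply: mulr_gt0.
case: (lerP mu u) => hu.
  nra.
have h3 : u <= 7/10 * (c*w+mu) by lra.
have h4 : 0 <= (u - 3/10*(c*w+mu)) * (7/10*(c*w+mu) - u) by apply: mulr_ge0; lra.
have h5 : 0 <= (c*w - mu)^+2 by apply: sqr_ge0.
nra.
Qed.

Lemma amgm (R : realFieldType) (th y : R) : 0 < th ->
  10/7 * y <= th + 25/(49*th) * y^+2.
Proof.
move=> t0; rewrite -subr_ge0.
have -> : th + 25/(49*th) * y^+2 - 10/7 * y = (th - 5/7*y)^+2 / th.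
  by field; lra.
by apply: divr_ge0; [apply: sqr_ge0 | lra].
Qed.

Lemma pw (R : realFieldType) (c mu w v th : R) : 0 < c -> 0 < mu -> 0 < w ->
  0 <= v -> 0 < th ->
  `|(c*v+mu)^-1 - (c*w+mu)^-1| <= (c*w+mu)^-1 *
     (th + (25/(49*th) * (c^+2/(c*w+mu)^+2) + 25/21 * (c/(mu*w))) * (v-w)^+2).
Proof.
move=> c0 m0 w0 v0 t0.
have cw0 : 0 < c * w by apply: mulr_gt0.
have cv0 : 0 <= c * v by apply: mulr_ge0 => //; lra.
set s := c*w+mu; set r := c*v+mu.
have s0 : 0 < s by rewrite /s; lra.
have r0 : 0 < r by rewrite /r; lra.
have -> : r^-1 - s^-1 = s^-1 * (c * (w - v) / r) by rewrite /s /r; field; lra.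
rewrite normrM gtr0_norm ?invr_gt0 // ler_pM2l ?invr_gt0 //.
have ri : 0 < r^-1 by rewrite invr_gt0.
rewrite normrM normrM (gtr0_norm c0) (gtr0_norm ri) -mulrA mulrC -mulrA [`|_| * _]mulrC -normrN opprB mulrA.
set y := c * `|v - w| / s.
have y0 : 0 <= y by apply: divr_ge0; [apply: mulr_ge0 => //; lra | lra].
have Ay : 25/(49*th) * (c^+2/s^+2) * (v-w)^+2 = 25/(49*th) * y^+2.
  by rewrite /y expr_div_n exprMn real_normK ?num_real //; field; lra.
have B0 : 0 <= 25/21 * (c/(mu*w)) * (v-w)^+2.
  apply: mulr_ge0; last exact: sqr_ge0.
  apply: mulr_ge0; first lra.
  by apply: divr_ge0; [lra | apply: mulr_ge0; lra].
have am := amgm (c * `|v - w| / s) t0.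
rewrite mulrDl Ay addrA.
set a := c * `|v - w|.
have a0 : 0 <= a by apply: mulr_ge0; [lra | apply: normr_ge0].
have ya : y * s = a by rewrite /y divfK //; lra.
have -> : r^-1 * `|v - w| * c = a / r by rewrite /a; field; lra.
have hk : forall k, 0 < k -> k * s <= r -> a / r <= k^-1 * y.
  move=> k k0 hr; rewrite ler_pdivrMr //.
  have -> : k^-1 * y * r = a + k^-1 * y * (r - k * s) by rewrite -ya; field; lra.
  rewrite lerDl; apply: mulr_ge0; last lra.
  by apply: mulr_ge0 => //; rewrite invr_ge0; lra.
have am' : 10/7 * y <= th + 25 / (49 * th) * y ^+ 2 by apply: amgm.
case: (lerP w v) => hvw.
  have := hk 1 ltr01; rewrite mul1r invr1 mul1r => h.
  have : a / r <= y by apply: h; rewrite /r /s; nra.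
  by move=> h2; nra.
have avw : a = c * (w - v) by rewrite /a distrC gtr0_norm //; lra.
case: (lerP a (3/10 * s)) => ha.
  have := hk (7/10) _ _; rewrite invf_div => h.
  have rs : r = s - a by rewrite /r /s avw; ring.
  have : a / r <= 10/7 * y by apply: h; [lra | rewrite rs; lra].
  by move=> h2; nra.
have au : a <= c * w by rewrite avw; nra.
have a0' : 0 < a by lra.
have ku := key_u c0 m0 w0 ha au.
have rsa : r = c*w+mu - a by rewrite /r avw; ring.
have hA : 0 <= 25 / (49 * th) * y ^+ 2.
  by apply: mulr_ge0; [apply: divr_ge0; lra | apply: sqr_ge0].
suff h : a / r <= 25 / 21 * (c / (mu * w)) * (v - w) ^+ 2 by lra.
rewrite ler_pdivrMr //.
have mw0 : 0 < c * mu * w by apply: mulr_gt0 => //; apply: mulr_gt0.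
have -> : 25 / 21 * (c / (mu * w)) * (v - w) ^+ 2 * r =
   25/21 * a * (a * (c*w+mu-a)) / (c*mu*w).
  rewrite rsa avw; field; lra.
rewrite ler_pdivlMr //.
have : a * (21/25 * (c*mu*w)) <= a * (a * (c * w + mu - a)) by rewrite ler_pM2l.
move=> h3.
suff : a * (c * mu * w) <= 25 / 21 * a * (a * (c * w + mu - a)) by move=> h4; lra.
nra.
Qed.

Lemma pw0 (R : realFieldType) (c mu v th mR : R) : 0 < c -> 0 < mu -> 0 <= v ->
  v <= mR * v^+2 -> 0 <= th ->
  `|(c*v+mu)^-1 - (c*0+mu)^-1| <= (c*0+mu)^-1 * (th + c * mR / mu * (v - 0)^+2).
Proof.
move=> c0 m0 v0 hv t0.
rewrite mulr0 add0r subr0.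
have cv0 : 0 <= c * v by apply: mulr_ge0 => //; lra.
have r0 : 0 < c * v + mu by lra.
have -> : (c * v + mu)^-1 - mu^-1 = - (c * v / ((c*v+mu) * mu)) by field; lra.
rewrite normrN ger0_norm; last by apply: divr_ge0 => //; apply: mulr_ge0; lra.
have h1 : c * v / ((c*v+mu) * mu) <= c * v / (mu * mu).
  apply: ler_pM => //; first by rewrite invr_ge0; apply: mulr_ge0; lra.
  rewrite lef_pV2 ?posrE; [by rewrite ler_pM2r //; lra | by apply: mulr_gt0 => //; lra|].
  by apply: mulr_gt0.
apply: (le_trans h1).
have -> : c * v / (mu * mu) = mu^-1 * (c / mu * v) by field; lra.
rewrite ler_pM2l ?invr_gt0 //.
have cm : 0 <= c / mu by apply: divr_ge0; lra.
have : c / mu * v <= c / mu * (mR * v^+2) by rewrite ler_wpM2l.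
move=> h.
have -> : c * mR / mu * v^+2 = c / mu * (mR * v^+2) by field; lra.
lra.
Qed.

Lemma final_ineq (R : realFieldType) (c mu w g mR : R) : 0 < c -> c <= 1 -> 0 < mu ->
  0 < w -> w <= 1 -> 0 < g -> g <= 1 -> 0 < mR -> 6 <= g^+2 * mu * mR ->
  3*g/20 + (25/(49*(3*g/20)) * (c^+2/(c*w+mu)^+2) + 25/21 * (c/(mu*w)))
     * (w * (1 - w) / mR) <= g / 2.
Proof.
move=> c0 c1 m0 w0 w1 g0 g1 mR0 hm.
have s0 : 0 < c * w + mu by nra.
set L := (mu * mR)^-1.
have L0 : 0 <= L by rewrite invr_ge0; nra.
have Lb : L <= g^+2 / 6.
  have p0 : 0 < mu * mR by apply: mulr_gt0.
  rewrite /L -div1r ler_pdivrMr //.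
  have -> : g^+2 / 6 * (mu * mR) = (g^+2 * mu * mR) / 6 by field.
  lra.
set Q := c^+2 * w * (1 - w) / (c*w+mu)^+2.
have Q0 : 0 <= Q * mu.
  apply: mulr_ge0; last lra.
  apply: divr_ge0; last by apply: sqr_ge0.
  by apply: mulr_ge0; [apply: mulr_ge0; [apply: sqr_ge0|lra]|lra].
have Qb : Q * mu <= 1/4.
  rewrite /Q mulrAC ler_pdivrMr; last by apply: exprn_gt0.
  have h5 : 0 <= (c*w - mu)^+2 by apply: sqr_ge0.
  have h6 : c^+2 * w * (1 - w) <= c * w.
    have hc : c * (1 - w) <= 1 by nra.
    have -> : c^+2 * w * (1 - w) = (c * w) * (c * (1 - w)) by ring.
    by rewrite -[X in _ <= X]mulr1 ler_wpM2l //; nra.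
  have h7 : c^+2 * w * (1 - w) * mu <= c * w * mu by rewrite ler_pM2r.
  have e : (c*w+mu)^+2 = (c*w-mu)^+2 + 4*(c*w*mu) by ring.
  rewrite e; lra.
have e : (25/(49*(3*g/20)) * (c^+2/(c*w+mu)^+2) + 25/21 * (c/(mu*w)))
     * (w * (1 - w) / mR) = 500/(147*g) * (Q * mu) * L + 25/21 * (c * (1 - w)) * L.
  by rewrite /Q /L; field; repeat split; lra.
rewrite e.
have A0 : 0 < 500/(147*g) by apply: divr_gt0; lra.
have t1 : 500/(147*g) * (Q * mu) * L <= 500/(147*g) * (1/4) * (g^+2/6).
  apply: ler_pM => //; first by apply: mulr_ge0 => //; lra.
  by apply: ler_pM => //; lra.
have cw : 0 <= c * (1 - w) by apply: mulr_ge0; lra.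
have cw1 : c * (1 - w) <= 1 by nra.
have t2 : 25/21 * (c * (1 - w)) * L <= 25/21 * 1 * (g^+2/6).
  apply: ler_pM => //; first by apply: mulr_ge0 => //; lra.
  by apply: ler_pM => //; lra.
have e2 : 500/(147*g) * (1/4) * (g^+2/6) = 125/882 * g by field; lra.
rewrite e2 in t1.
have g2 : g^+2 <= g by nra.
lra.
Qed.

End PW.


Section Samp.
Variables (R : realFieldType) (Pi : finType) (P : {ffun Pi -> R}).
Hypotheses (P0 : forall p, 0 <= P p) (P1 : \sum_p P p = 1).
Variables (m : nat) (E : {set Pi}).
Definition bE (p : Pi) : R := if p \in E then 1 else 0.
Definition wE := \sum_(p in E) P p.

Lemma prodE (phi : 'I_m -> Pi -> R) :
  \sum_(s : {ffun 'I_m -> Pi}) \prod_i (P (s i) * phi i (s i)) =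
  \prod_i \sum_p P p * phi i p.
Proof. by rewrite bigA_distr_bigA. Qed.

Lemma wgt1 : \sum_(s : {ffun 'I_m -> Pi}) \prod_(i < m) P (s i) = 1.
Proof.
have /= h := prodE (fun _ _ => 1).
under eq_bigr do under eq_bigr do rewrite -[P _]mulr1.
rewrite h big1 // => i _; under eq_bigr do rewrite !mulr1; exact: P1.
Qed.

Lemma wgt_ge0 (s : {ffun 'I_m -> Pi}) : 0 <= \prod_(i < m) P (s i).
Proof. by apply: prodr_ge0 => i _. Qed.

Lemma prod_if (i : 'I_m) (F : 'I_m -> R) :
  \prod_k (if k == i then F k else 1) = F i.
Proof. by rewrite -big_mkcond big_pred1_eq. Qed.

Lemma sumPb : \sum_p P p * bE p = wE.
Proof.
rewrite /wE [RHS]big_mkcond /=; apply: eq_bigr => p _.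
by rewrite /bE; case: (p \in E); rewrite ?mulr1 ?mulr0.
Qed.

Lemma pair_exp (g : Pi -> R) (i j : 'I_m) :
  \sum_(s : {ffun 'I_m -> Pi}) \prod_(k < m) P (s k) * (g (s i) * g (s j)) =
  if i == j then \sum_p P p * (g p * g p) else (\sum_p P p * g p) * \sum_p P p * g p.
Proof.
pose phi (k : 'I_m) (p : Pi) := (if k == i then g p else 1) * (if k == j then g p else 1).
have -> : \sum_(s : {ffun 'I_m -> Pi}) \prod_(k < m) P (s k) * (g (s i) * g (s j)) =
  \sum_(s : {ffun 'I_m -> Pi}) \prod_k (P (s k) * phi k (s k)).
  apply: eq_bigr => s _; rewrite big_split /= /phi big_split /=.
  by rewrite (prod_if i (fun k => g (s k))) (prod_if j (fun k => g (s k))).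
rewrite prodE (bigD1 i) //= /phi eqxx /=.
case: (eqVneq i j) => [<-|nij].
  rewrite [X in _ * X]big1 ?mulr1 // => k /negbTE ->; under eq_bigr do rewrite !mulr1; exact: P1.
rewrite (bigD1 j) /=; last by rewrite eq_sym.
rewrite [X in _ * (_ * X)]big1 ?mulr1; last first.
  move=> k /andP[/negbTE -> /negbTE ->].
  by under eq_bigr do rewrite !mulr1; exact: P1.
rewrite eq_sym (negbTE nij) eqxx.
by under eq_bigr do rewrite mulr1; under [X in _ * X]eq_bigr do rewrite mul1r.
Qed.

Lemma var_emp : (0 < m)%N ->
  \sum_(s : {ffun 'I_m -> Pi}) \prod_(k < m) P (s k) *
     (m%:R^-1 * \sum_i bE (s i) - wE)^+2 = wE * (1 - wE) / m%:R.
Proof.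
move=> m0.
have mR : m%:R != 0 :> R by rewrite pnatr_eq0 -lt0n.
pose g p := bE p - wE.
have eq1 : forall s : {ffun 'I_m -> Pi},
    (m%:R^-1 * \sum_i bE (s i) - wE)^+2 =
    m%:R^-2 * \sum_i \sum_j g (s i) * g (s j).
  move=> s; rewrite -big_distrlr /= -expr2 /g sumrB sumr_const card_ord.
  by rewrite -mulr_natr; field.
have sg : \sum_p P p * g p = 0.
  rewrite /g; under eq_bigr do rewrite mulrBr.
  by rewrite sumrB sumPb -mulr_suml P1 mul1r subrr.
have sgg : \sum_p P p * (g p * g p) = wE * (1 - wE).
  have h : forall p, P p * (g p * g p) = P p * bE p * (1 - 2 * wE) + wE^+2 * P p.
    by move=> p; rewrite /g /bE; case: (p \in E); ring.
  under eq_bigr do rewrite h.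
  by rewrite big_split /= -mulr_suml -mulr_sumr sumPb P1; ring.
rewrite (eq_bigr (fun s : {ffun 'I_m -> Pi} => m%:R^-2 * \sum_i \sum_j
   \prod_(k < m) P (s k) * (g (s i) * g (s j)))); last first.
  move=> s _; rewrite eq1 mulrCA; congr (_ * _); rewrite mulr_sumr.
  by apply: eq_bigr => i _; rewrite mulr_sumr.
rewrite -mulr_sumr exchange_big /=.
under eq_bigr do rewrite exchange_big /=.
under eq_bigr do under eq_bigr do rewrite pair_exp sg sgg mul0r.
have h2 : forall i : 'I_m, \sum_(j < m) (if i == j then wE * (1 - wE) else 0) = wE * (1 - wE).
  move=> i; rewrite (bigD1 i) //= eqxx big1 ?addr0 // => j /negbTE.
  by rewrite eq_sym => ->.
under eq_bigr do rewrite h2.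
rewrite sumr_const card_ord -mulr_natr; field; exact: mR.
Qed.

Lemma exp_bound (F : {ffun 'I_m -> Pi} -> R) (c0 th M : R) : (0 < m)%N -> 0 <= c0 ->
  (forall s, F s <= c0 * (th + M * (m%:R^-1 * \sum_i bE (s i) - wE)^+2)) ->
  \sum_(s : {ffun 'I_m -> Pi}) \prod_(k < m) P (s k) * F s
    <= c0 * (th + M * (wE * (1 - wE) / m%:R)).
Proof.
move=> m0 c00 hF.
apply: (@le_trans _ _ (\sum_(s : {ffun 'I_m -> Pi}) \prod_(k < m) P (s k) *
   (c0 * (th + M * (m%:R^-1 * \sum_i bE (s i) - wE)^+2)))).
  by apply: ler_sum => s _; apply: ler_wpM2l; [apply: wgt_ge0 | apply: hF].
rewrite (eq_bigr (fun s : {ffun 'I_m -> Pi} => c0 * th * \prod_(k < m) P (s k) +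
   c0 * M * (\prod_(k < m) P (s k) * (m%:R^-1 * \sum_i bE (s i) - wE)^+2))); last first.
  by move=> s _; ring.
rewrite big_split /= -!mulr_sumr wgt1 var_emp //.
by rewrite le_eqVlt; apply/orP; left; apply/eqP; ring.
Qed.

Lemma bE_ge0 p : 0 <= bE p.
Proof. by rewrite /bE; case: (p \in E). Qed.

Lemma kk (s : {ffun 'I_m -> Pi}) : (0 < m)%N ->
  m%:R^-1 * \sum_i bE (s i) <= m%:R * (m%:R^-1 * \sum_i bE (s i))^+2.
Proof.
move=> m0.
have mR : 0 < m%:R :> R by rewrite ltr0n.
set k := \sum_i bE (s i).
have k0 : 0 <= k by apply: sumr_ge0 => i _; apply: bE_ge0.
have kk2 : k <= k^+2.
  case: (boolP [exists i, s i \in E]) => [/existsP [i hi]|hn].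
    have : 1 <= k.
      rewrite /k (bigD1 i) //= {1}/bE hi -[X in X <= _]addr0 lerD2l.
      by apply: sumr_ge0 => j _; apply: bE_ge0.
    by move=> h1; nra.
  have -> : k = 0.
    apply: big1 => i _; rewrite /bE; case: ifP => // hi.
    by move: hn; rewrite negb_exists => /forallP /(_ i); rewrite hi.
  by rewrite expr0n.
have -> : m%:R * (m%:R^-1 * k)^+2 = m%:R^-1 * k^+2 by field; lra.
by rewrite ler_pM2l ?invr_gt0.
Qed.

End Samp.

Section K4.
Local Open Scope classical_set_scope.

Lemma int_fin (R: realType) d (X: measurableType d) (D: probability X R)
  (T: finType) (S: X -> T) (g: T -> R) :
 (forall t, measurable (S @^-1` [set t])) ->
 Rintegral D setT (fun x => g (S x)) = \sum_t g t * fine (D (S @^-1` [set t])).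
Proof.
move=> mS.
have E : forall x, g (S x) = \sum_t g t * \1_(S @^-1` [set t]) x.
  move=> x; rewrite (bigD1 (S x)) //= big1 ?addr0.
    by rewrite indicE mem_set ?mulr1.
  move=> t /negbTE ht; rewrite indicE memNset ?mulr0 //= => St.
  by rewrite St eqxx in ht.
rewrite /Rintegral.
under eq_integral do rewrite E -sumEFin.
rewrite integral_sum //; last first.
  move=> t; under eq_fun do rewrite EFinM.
  exact/integrableZl/integrable_indic.
rewrite (eq_bigr (fun t => (g t * fine (D (S @^-1` [set t])))%:E)); last first.
  move=> t _.
  rewrite (_ : (fun x => _) = fun x => ((g t)%:E * (\1_(S @^-1` [set t]) x)%:E)%E); last first.
    by apply/funext => x; rewrite EFinM.
  rewrite integralZl //; last exact: integrable_indic.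
  by rewrite integral_indic // setIT EFinM fineK // fin_num_measure.
by rewrite sumEFin.
Qed.

End K4.

Section K5.
Local Open Scope classical_set_scope.

Lemma fib_meas d (X: measurableType d) (A Pi: finType) (ev: Pi -> X -> A) (q: Pi)
 (hm : forall p a, measurable [set x | ev p x = a]) (T0 : {set Pi}) :
 measurable ((fun x => finset (fun p => ev p x == ev q x)) @^-1` [set T0]).
Proof.
have mE : forall p, measurable [set x | ev p x = ev q x].
  move=> p; have -> : [set x | ev p x = ev q x] = \bigcup_(a in [set: A])
      ([set x | ev p x = a] `&` [set x | ev q x = a]).
    apply/seteqP; split => x /=.
      by move=> h; exists (ev q x).
    by move=> [a _ [-> ->]].
  apply: fin_bigcup_measurable; first exact: finite_finset.
  by move=> a _; apply: measurableI.
have -> : (fun x => finset (fun p => ev p x == ev q x)) @^-1` [set T0] =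
  \bigcap_(p in [set: Pi]) (if p \in T0 then [set x | ev p x = ev q x]
                            else ~` [set x | ev p x = ev q x]).
  apply/seteqP; split => x /=.
    move=> <- p _; rewrite inE; case: eqP => //.
  move=> h; apply/setP => p; rewrite inE; have := h p I.
  by case: (p \in T0) => /=; case: eqP.
apply: fin_bigcap_measurable; first exact: finite_finset.
by move=> p _; case: (p \in T0) => //; apply: measurableC.
Qed.

End K5.



Section Core.
Variables (R : realType) (Pi : finType) (P : {ffun Pi -> R}).
Hypotheses (P0 : forall p, 0 <= P p) (P1 : \sum_p P p = 1).

Lemma emp_sum m (s : {ffun 'I_m -> Pi}) (E : {set Pi}) :
  \sum_(p in E) emp R s p = m%:R^-1 * \sum_i bE R E (s i).
Proof.
under eq_bigr do rewrite ffunE.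
rewrite -mulr_sumr; congr (_ * _).
have h : forall p, #|[set i | s i == p]|%:R = \sum_i (if s i == p then 1 else 0 : R).
  move=> p; rewrite -sum1_card natr_sum big_mkcond /=.
  by apply: eq_bigr => i _; rewrite inE; case: ifP.

under eq_bigr do rewrite h.
rewrite exchange_big /=; apply: eq_bigr => i _.
rewrite /bE; case: ifP => hi.
  rewrite (bigD1 (s i)) //= eqxx big1 ?addr0 // => p /andP[_ /negbTE].
  by rewrite eq_sym => ->.
by apply: big1 => p pE; case: eqP => // ep; rewrite ep pE in hi.
Qed.

Lemma wE_ge0 E : 0 <= wE P E.
Proof. by apply: sumr_ge0 => p _. Qed.

Lemma wE_le1 E : wE P E <= 1.
Proof.
rewrite -P1 [X in _ <= X](bigID (fun p => p \in E)) /= lerDl.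
by apply: sumr_ge0 => p _.
Qed.

Lemma core (K : nat) (mu g : R) (m : nat) (E : {set Pi}) :
  0 < 1 - K%:R * mu -> 1 - K%:R * mu <= 1 -> 0 < mu -> 0 < g -> g <= 1 ->
  (0 < m)%N -> 6 <= g^+2 * mu * m%:R ->
  \sum_(s : {ffun 'I_m -> Pi}) (\prod_(i < m) P (s i)) *
     `| wt K mu (\sum_(p in E) emp R s p) - wt K mu (\sum_(p in E) P p) |
  <= g / 2 * wt K mu (\sum_(p in E) P p).
Proof.
move=> c0 c1 m0 g0 g1 mpos hm.
under eq_bigr do rewrite emp_sum.
rewrite /wt; set c := 1 - K%:R * mu.
rewrite -/(wE P E).
have w0 := wE_ge0 E; have w1 := wE_le1 E.
have mR : 0 < m%:R :> R by rewrite ltr0n.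
have vge0 : forall s : {ffun 'I_m -> Pi}, 0 <= m%:R^-1 * \sum_i bE R E (s i).
  move=> s; apply: mulr_ge0; first by rewrite invr_ge0; lra.
  by apply: sumr_ge0 => i _; apply: bE_ge0.
have th0 : 0 < 3 * g / 20 by lra.
have cw0 : 0 <= c * wE P E by apply: mulr_ge0; rewrite /c; lra.
pose F := fun s : {ffun 'I_m -> Pi} =>
  `|(c * (m%:R^-1 * \sum_i0 bE R E (s i0)) + mu)^-1 - (c * wE P E + mu)^-1|.
have c00 : 0 <= (c * wE P E + mu)^-1 by rewrite invr_ge0; lra.
case: (ltrP 0 (wE P E)) => hw.
  have H := exp_bound P0 P1 (E := E) (F := F) (c0 := (c * wE P E + mu)^-1)
     (th := 3 * g / 20)
     (M := 25/(49*(3*g/20)) * (c^+2/(c*wE P E+mu)^+2) + 25/21 * (c/(mu*wE P E))) mpos c00.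
  apply: le_trans; first apply: H.
    by move=> s; apply: pw => //; rewrite /c; lra.
  rewrite [X in _ <= X]mulrC ler_wpM2l //.
  by apply: final_ineq => //; rewrite /c; lra.
have hw0 : wE P E = 0 by lra.
have H := exp_bound P0 P1 (E := E) (F := F) (c0 := (c * wE P E + mu)^-1)
     (th := 3 * g / 20) (M := c * m%:R / mu) mpos c00.
apply: le_trans; first apply: H.
  move=> s; rewrite /F /= hw0. apply: pw0; [rewrite /c; lra | lra | exact: vge0 | exact: kk | lra].
rewrite hw0 !(mul0r, mulr0, add0r, addr0) [X in _ <= X]mulrC ler_wpM2l //.
  by rewrite invr_ge0; lra.
lra.
Qed.

Section Gen.
Variables (K : nat) (mu g : R) (m : nat).
Hypotheses (c0 : 0 < 1 - K%:R * mu) (c1 : 1 - K%:R * mu <= 1) (mu0 : 0 < mu)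
  (g0 : 0 < g) (g1 : g <= 1) (mpos : (0 < m)%N) (hm : 6 <= g^+2 * mu * m%:R).

Definition hQ (Q : {ffun Pi -> R}) (E : {set Pi}) := wt K mu (\sum_(p in E) Q p).

Lemma hQ_gt0 (Q : {ffun Pi -> R}) (E : {set Pi}) : (forall p, 0 <= Q p) -> 0 < hQ Q E.
Proof.
move=> Q0; rewrite /hQ /wt invr_gt0.
have s0 : 0 <= \sum_(p in E) Q p by apply: sumr_ge0.
have k0 : 0 <= 1 - K%:R * mu by apply: ltW.
have : 0 <= (1 - K%:R * mu) * \sum_(p in E) Q p by apply: mulr_ge0.
move=> h; apply: (lt_le_trans mu0); rewrite -[X in X <= _]add0r lerD2r; exact: h.
Qed.

Lemma Tbound (J : finType) (a : J -> R) (E : J -> {set Pi}) : (forall j, 0 <= a j) ->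
  \sum_(s : {ffun 'I_m -> Pi}) \prod_(i < m) P (s i) *
     (\sum_j `|hQ (emp R s) (E j) - hQ P (E j)| * a j)
   <= g / 2 * \sum_j hQ P (E j) * a j.
Proof.
move=> a0.
under eq_bigr do rewrite mulr_sumr.
rewrite exchange_big /= mulr_sumr; apply: ler_sum => j _.
under eq_bigr do rewrite mulrA.
rewrite -mulr_suml mulrA; apply: ler_wpM2r => //.
exact: core.
Qed.

Lemma T0lem (J : finType) (a : J -> R) (E : J -> {set Pi}) (Q : {ffun Pi -> R}) :
  (forall j, 0 <= a j) -> \sum_j hQ P (E j) * a j = 0 ->
  \sum_j `|hQ Q (E j) - hQ P (E j)| * a j = 0.
Proof.
move=> a0 h.
have h2 := psumr_eq0P (fun j _ => mulr_ge0 (ltW (hQ_gt0 (E j) P0)) (a0 j)) h.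
apply: big1 => j _.
have := h2 j isT; move/eqP; rewrite mulf_eq0 (gt_eqF (hQ_gt0 (E j) P0)) /=.
by move/eqP ->; rewrite mulr0.
Qed.

Lemma emp_ge0 (s : {ffun 'I_m -> Pi}) p : 0 <= emp R s p.
Proof. by rewrite ffunE; apply: mulr_ge0; rewrite ?invr_ge0 ler0n. Qed.

Lemma exist_Q (p0 : Pi) (J1 J2 : finType) (a1 : J1 -> R) (a2 : J2 -> R)
  (E1 : J1 -> {set Pi}) (E2 : J2 -> {set Pi}) :
  (forall j, 0 <= a1 j) -> (forall j, 0 <= a2 j) ->
  exists s : {ffun 'I_m -> Pi},
   \sum_j hQ P (E1 j) * a1 j - \sum_j hQ (emp R s) (E1 j) * a1 j
      <= g * \sum_j hQ P (E1 j) * a1 j /\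
   \sum_j hQ (emp R s) (E2 j) * a2 j - \sum_j hQ P (E2 j) * a2 j
      <= g * \sum_j hQ P (E2 j) * a2 j.
Proof.
move=> a10 a20.
have g0' := g0.
pose T1 (s : {ffun 'I_m -> Pi}) := \sum_j `|hQ (emp R s) (E1 j) - hQ P (E1 j)| * a1 j.
pose T2 (s : {ffun 'I_m -> Pi}) := \sum_j `|hQ (emp R s) (E2 j) - hQ P (E2 j)| * a2 j.
pose V1 := \sum_j hQ P (E1 j) * a1 j.
pose V2 := \sum_j hQ P (E2 j) * a2 j.
have V10 : 0 <= V1 by apply: sumr_ge0 => j _; apply: mulr_ge0 => //; apply: ltW; apply: hQ_gt0.
have V20 : 0 <= V2 by apply: sumr_ge0 => j _; apply: mulr_ge0 => //; apply: ltW; apply: hQ_gt0.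
have T10 : forall s, 0 <= T1 s by move=> s; apply: sumr_ge0 => j _; apply: mulr_ge0.
have T20 : forall s, 0 <= T2 s by move=> s; apply: sumr_ge0 => j _; apply: mulr_ge0.
pose Z s := T1 s / V1 + T2 s / V2.
have hk : forall (T : {ffun 'I_m -> Pi} -> R) V, 0 <= V ->
    \sum_(s : {ffun 'I_m -> Pi}) \prod_(i < m) P (s i) * T s <= g / 2 * V ->
    \sum_(s : {ffun 'I_m -> Pi}) \prod_(i < m) P (s i) * (T s / V) <= g / 2.
  move=> T V V0 h; under eq_bigr do rewrite mulrA; rewrite -mulr_suml.
  case: (ltrP 0 V) => hV.
    by rewrite ler_pdivrMr.
  have -> : V = 0 by apply/eqP; rewrite eq_le hV V0.
  by rewrite invr0 mulr0; lra.

have EZ : \sum_(s : {ffun 'I_m -> Pi}) \prod_(i < m) P (s i) * Z s <= g.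
  under eq_bigr do rewrite mulrDr.
  rewrite big_split /=.
  have := hk T1 V1 V10 (Tbound E1 a10).
  have := hk T2 V2 V20 (Tbound E2 a20).
  lra.
case: (@arg_minP _ R _ [ffun=> p0] predT Z isT) => s _ hs.
have Zs : Z s <= g.
  apply: le_trans EZ.
  rewrite -[Z s]mul1r -{1}(wgt1 P1 m) mulr_suml; apply: ler_sum => s' _.
  by apply: ler_wpM2l; [apply: wgt_ge0 | apply: hs].
have key : forall T V, 0 <= V -> (V = 0 -> T = 0) -> T / V <= g -> T <= g * V.
  move=> T V V0 hT h.
  case: (ltrP 0 V) => hV; first by rewrite -ler_pdivrMr // mulrC.
  have V00 : V = 0 by apply/eqP; rewrite eq_le hV V0.
  by rewrite hT // V00 mulr0.
have d1 : T1 s / V1 <= g.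
  have : 0 <= T2 s / V2 by apply: divr_ge0.
  rewrite /Z in Zs; lra.
have d2 : T2 s / V2 <= g.
  have : 0 <= T1 s / V1 by apply: divr_ge0.
  rewrite /Z in Zs; lra.
have e1 := key _ _ V10 (T0lem (emp R s) a10) d1.
have e2 := key _ _ V20 (T0lem (emp R s) a20) d2.
exists s; split.
  apply: le_trans e1; rewrite -sumrB; apply: ler_sum => j _.
  rewrite -mulrBl; apply: ler_wpM2r => //.
  by rewrite distrC; apply: ler_norm.
apply: le_trans e2; rewrite -sumrB; apply: ler_sum => j _.
rewrite -mulrBl; apply: ler_wpM2r => //.
exact: ler_norm.
Qed.
End Gen.
End Core.

Unset Implicit Arguments.


Lemma mu_facts (R : realType) (K N t : nat) (delta : R) :
  (0 < K)%N -> (0 < N)%N -> (0 < t)%N -> 0 < delta < 1 ->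
  0 < mut K N t delta /\ K%:R * mut K N t delta <= 1/2.
Proof.
move=> K0 N0 t0 /andP[d0 d1].
have KR : 0 < K%:R :> R by rewrite ltr0n.
split.
  rewrite /mut lt_min; apply/andP; split.
    by rewrite invr_gt0 mulr_gt0.
  rewrite sqrtr_gt0 /Ct; apply: divr_gt0; last first.
    by rewrite mulr_gt0 // ?mulr_gt0 // ltr0n.
  apply: mulr_gt0 => //; apply: ln_gt0.
  rewrite ltr_pdivlMr // mul1r.
  have : 1 <= N%:R * t%:R :> R.
    by rewrite -natrM ler1n muln_gt0 N0 t0.
  lra.
have hm : mut K N t delta <= (2 * K%:R)^-1.
  by rewrite /mut ge_min lexx.
have : K%:R * mut K N t delta <= K%:R * (2 * K%:R)^-1 by rewrite ler_pM2l.
have -> : K%:R * (2 * K%:R)^-1 = 1/2 :> R by field; lra.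
done.
Qed.

Lemma m_facts (R : realType) (mu g : R) : 0 < mu -> 0 < g ->
  (0 < absz (Num.ceil (6 / (g ^+ 2 * mu))))%N /\
  6 <= g^+2 * mu * (absz (Num.ceil (6 / (g ^+ 2 * mu))))%:R.
Proof.
move=> m0 g0.
have p : 0 < g^+2 * mu by apply: mulr_gt0 => //; apply: exprn_gt0.
have x0 : 0 < 6 / (g^+2 * mu) by apply: divr_gt0.
have z0 : (0 <= Num.ceil (6 / (g ^+ 2 * mu)))%R by rewrite ceil_ge0; lra.
have e : (absz (Num.ceil (6 / (g ^+ 2 * mu))))%:R = (Num.ceil (6 / (g ^+ 2 * mu)))%:~R :> R.
  by rewrite natr_absz ger0_norm.
have h := ceil_ge (6 / (g ^+ 2 * mu)).
rewrite -e in h.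
split.
  rewrite lt0n; apply/negP => /eqP h0; rewrite h0 in h; lra.
rewrite [X in X <= _](_ : _ = g^+2 * mu * (6 / (g ^+ 2 * mu))); last first.
  by rewrite mulrC divfK // gt_eqF.
by rewrite ler_pM2l.
Qed.

Lemma h_c (R : realFieldType) (x : R) : 0 <= x -> x <= 1/2 -> 0 < 1 - x /\ 1 - x <= 1.
Proof. move=> h1 h2; split; lra. Qed.
Lemma h_g (R : realFieldType) (g : R) : 0 < g -> g/2 <= g.
Proof. move=> h; lra. Qed.
Lemma h_l (R : realFieldType) (l : R) : 0 < l -> 0 <= 1 + l.
Proof. move=> h; lra. Qed.


Theorem lemma8 (R : realType) (d : measure_display) (X : measurableType d)
    (A Pi : finType) (ev : Pi -> X -> A) (D : probability X R)
    (delta : R) (t : nat) (xs : 'I_t.-1 -> X) (gamma : R) :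
  injective ev ->
  (forall (p : Pi) (a : A), measurable [set x | ev p x = a]) ->
  0 < delta < 1 ->
  (0 < t)%N ->
  0 < gamma <= 1 ->
  let K := #|A| in
  let N := #|Pi| in
  let mu := mut K N t delta in
  let m := absz (Num.ceil (6 / (gamma ^+ 2 * mu))) in
  (forall (x : X) (P : {ffun Pi -> R}) (q : Pi), is_distr P ->
     Esample P m (fun Q =>
       `| wt K mu (WP ev Q x (ev q x)) - wt K mu (WP ev P x (ev q x)) |)
     <= gamma * wt K mu (WP ev P x (ev q x)))
  /\
  (forall (P : {ffun Pi -> R}) (q : Pi), is_distr P ->
     exists Q : {ffun Pi -> R}, in_Sm m Q /\
       forall lambda : R, 0 < lambda ->
         (Vpop D ev K N t delta P q - Vpop D ev K N t delta Q q)
         + (1 + lambda) * (Vhat ev K N delta xs Q q - Vhat ev K N delta xs P q)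
         <= gamma * (Vpop D ev K N t delta P q
                     + (1 + lambda) * Vhat ev K N delta xs P q)).
Proof.
move=> hinj hmeas hd ht hg K N mu m.
have [g0 g1] : 0 < gamma /\ gamma <= 1 by move/andP: hg.
have cards : forall (q : Pi) (a : A), (0 < K)%N /\ (0 < N)%N.
  by move=> q a; split; apply/card_gt0P; [exists a | exists q].
have facts : forall (q : Pi) (a : A),
    [/\ 0 < mu, 0 < 1 - K%:R * mu, 1 - K%:R * mu <= 1, (0 < m)%N &
        6 <= gamma^+2 * mu * m%:R].
  move=> q a; have [K0 N0] := cards q a.
  have [mu0 Kmu] : 0 < mu /\ K%:R * mu <= 1/2 := @mu_facts R K N t delta K0 N0 ht hd.
  have [mpos hm] : (0 < m)%N /\ 6 <= gamma^+2 * mu * m%:R := @m_facts R mu gamma mu0 g0.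
  have Km0 : 0 <= K%:R * mu by apply: mulr_ge0; [rewrite ler0n | apply: ltW].
  by have [? ?] := @h_c _ _ Km0 Kmu; split.
split.
  move=> x P q [P0 P1].
  have [mu0 c0 c1 mpos hm] := facts q (ev q x).
  rewrite /Esample /=.
  set E := finset (fun p => ev p x == ev q x).
  have hE : forall Q : {ffun Pi -> R}, WP ev Q x (ev q x) = \sum_(p in E) Q p.
    by move=> Q; rewrite /WP; apply: eq_bigl => p; rewrite inE.
  under eq_bigr do rewrite !hE.
  rewrite hE.
  apply: le_trans; first exact: (core P0 P1 E c0 c1 mu0 g0 g1 mpos hm).
  have w0 : 0 < wt K mu (\sum_(p in E) P p) := hQ_gt0 c0 mu0 E P0.
  apply: ler_wpM2r; [exact: ltW | exact: h_g].
move=> P q [P0 P1].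
have [x0 _] : exists x : X, True.
  apply: contrapT => hn.
  have h : (setT : set X) = set0.
    by apply/seteqP; split => x // _; apply: hn; exists x.
  have := @probability_setT _ _ _ D; rewrite h measure0.
  by case=> /esym/eqP; rewrite oner_eq0.
have [mu0 c0 c1 mpos hm] := facts q (ev q x0).
pose S := fun x => finset (fun p => ev p x == ev q x).
have hE : forall (Q : {ffun Pi -> R}) x, WP ev Q x (ev q x) = \sum_(p in S x) Q p.
  by move=> Q x; rewrite /WP; apply: eq_bigl => p; rewrite inE.
have VpopE : forall Q : {ffun Pi -> R}, Vpop D ev K N t delta Q q =
    \sum_T0 hQ K mu Q T0 * fine (D (S @^-1` [set T0])%classic).
  move=> Q; rewrite /Vpop -(int_fin D (fun T0 => hQ K mu Q T0) (fib_meas q hmeas)).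
  by congr (Rintegral _ _ _); apply/funext => x; rewrite /hQ hE.
have VhatE : forall Q : {ffun Pi -> R}, Vhat ev K N delta xs Q q =
    \sum_i hQ K mu Q (S (xs i)) * (t.-1%:R)^-1.
  by move=> Q; rewrite /Vhat mulr_sumr; apply: eq_bigr => i _; rewrite mulrC /hQ hE.
have a10 : forall T0 : {set Pi}, 0 <= fine (D (S @^-1` [set T0])%classic).
  by move=> T0; apply: fine_ge0; apply: measure_ge0.
have a20 : forall i : 'I_t.-1, 0 <= (t.-1%:R)^-1 :> R.
  by move=> _; rewrite invr_ge0 ler0n.
have [s [h1 h2]] := exist_Q P0 P1 c0 c1 mu0 g0 g1 mpos hm q
  (a1 := fun T0 : {set Pi} => fine (D (S @^-1` [set T0])%classic))
  (a2 := fun i : 'I_t.-1 => (t.-1%:R)^-1 :> R)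
  (fun T0 : {set Pi} => T0) (fun i => S (xs i)) a10 a20.
exists (emp R s); split; first by exists s.
move=> lam lam0; rewrite !VpopE !VhatE.
have l1 : 0 <= 1 + lam by apply: h_l.
have h3 := ler_wpM2l l1 h2.
rewrite [X in _ <= X]mulrDr; apply: lerD; first exact: h1.
by rewrite mulrCA.
Qed.
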